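(* Let $a_1,\dots,a_n\in\mathbb{D}$ be distinct, $n\ge 2$, with $B_l(z)=\prod_{j=1}^l\frac{z-a_j}{1-\bar a_jz}$ and $k_j(z)=\frac1{1-\bar a_jz}$. Let $A$ be a linear operator on $K^2_{B_n}$ with matrix representation $(b^{(n)}_{i,j})_{i,j=1,\dots,n}$ with respect to $\{k_1,\dots,k_n\}$, i.e. $Ak_j=\sum_{m=1}^n b^{(n)}_{m,j}k_m$. Let $P_{n-1}$ be the orthogonal projection of $K^2_{B_n}$ onto $K^2_{B_{n-1}}$. Then $A_{n-1}=P_{n-1}A|_{K^2_{B_{n-1}}}$ has matrix representation $(b^{(n-1)}_{i,j})_{i,j=1,\dots,n-1}$ with respect to $\{k_1,\dots,k_{n-1}\}$ given by $$b^{(n-1)}_{i,j}=b^{(n)}_{i,j}+\frac{\overline{B_{n-1}(a_n)}\,b^{(n)}_{n,j}}{\overline{B_{n-1}'(a_i)}(\bar a_n-\bar a_i)}.$$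
   Context: $K^2_\theta=H^2\ominus\theta H^2$ for inner $\theta$; $\{k_1,\dots,k_l\}$ is a basis of $K^2_{B_l}$ and $K^2_{B_{n-1}}\subset K^2_{B_n}$. *)

(* Defs.v *)
(* Complex numbers: an arbitrary numClosedFieldType C
   (C = the complex numbers is an instance; algC is another). *)
From HB Require Import structures.
From mathcomp Require Import all_boot all_order all_algebra.
Set Implicit Arguments. Unset Strict Implicit. Unset Printing Implicit Defensive.
Import Order.TTheory GRing.Theory Num.Theory.
Local Open Scope ring_scope.

(* Points are indexed from 0: a 0, ..., a (n-1) correspond to a_1, ..., a_n. *)

Definition kfun (C : numClosedFieldType) (a : nat -> C) (j : nat) (z : C) : C :=
  (1 - (a j)^* * z)^-1.

(* H^2 inner product of kernels: <k_j, k_i> = k_j(a_i) (reproducing property). *)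
Definition gram (C : numClosedFieldType) (a : nat -> C) (i j : nat) : C :=
  kfun a j (a i).

(* H^2 inner product of f = sum_{m<n} c_m k_m and g = sum_{i<n} d_i k_i,
   computed through the coordinates. *)
Definition kip (C : numClosedFieldType) (a : nat -> C) (n : nat)
    (c d : nat -> C) : C :=
  \sum_(i < n) \sum_(m < n) c m * (d i)^* * gram a i m.

Definition kdelta (C : numClosedFieldType) (i : nat) : nat -> C :=
  fun m => (m == i)%:R.

(* g (coordinates) is the orthogonal projection of f (coordinates, an
   element of K^2_{B_n} = span{k_0..k_{n-1}}) onto span{k_0,...,k_{l-1}}:
   g lies in that span and f - g is orthogonal to each k_i, i < l. *)
Definition orth_proj_coords (C : numClosedFieldType) (a : nat -> C) (n l : nat)
    (f g : nat -> C) : Prop :=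
  (forall m, (l <= m)%N -> g m = 0) /\
  (forall i, (i < l)%N -> kip a n (fun m => f m - g m) (kdelta C i) = 0).

Definition Bnum (C : numClosedFieldType) (a : nat -> C) (l : nat) : {poly C} :=
  \prod_(j < l) ('X - (a j)%:P).
Definition Bden (C : numClosedFieldType) (a : nat -> C) (l : nat) : {poly C} :=
  \prod_(j < l) (1 - ((a j)^*)%:P * 'X).
Definition Beval (C : numClosedFieldType) (a : nat -> C) (l : nat) (z : C) : C :=
  (Bnum a l).[z] / (Bden a l).[z].
Definition Bder (C : numClosedFieldType) (a : nat -> C) (l : nat) (z : C) : C :=
  ((Bnum a l)^`().[z] * (Bden a l).[z] - (Bnum a l).[z] * (Bden a l)^`().[z])
    / ((Bden a l).[z] ^+ 2).

(* Main.v *)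
Require Import Defs.
From HB Require Import structures.
From mathcomp Require Import all_boot all_order all_algebra ring zify.
Import Order.TTheory GRing.Theory Num.Theory.
Local Open Scope ring_scope.

Definition pm (K : fieldType) (x : nat -> K) (N : nat) (m : 'I_N) : {poly K} :=
  \prod_(j < N | j != m) ('X - (x j)%:P).
Arguments pm {K} x {N} m.

Lemma size_prod_le2 (K : fieldType) (N : nat) (m : 'I_N) (F : 'I_N -> {poly K}) :
  (forall j, F j != 0) -> (forall j, (size (F j) <= 2)%N) ->
  (size (\prod_(j < N | j != m) F j)%R <= N)%N.
Proof.
move=> nz s2; rewrite size_prod //.
have -> : #|[pred j : 'I_N | j != m]| = N.-1 by rewrite (cardC1 m) card_ord.
have hs : (\sum_(j < N | j != m) size (F j) <= 2 * N.-1)%N.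
  apply: (@leq_trans (\sum_(j < N | j != m) 2)%N); first by apply: leq_sum => j _; exact: s2.
  by rewrite sum_nat_const (cardC1 m) card_ord mulnC.
case: N m F nz s2 hs => [[]//|N] m F _ _ hs /=.
move: hs; set s := (\sum_(_ < _ | _) _)%N; rewrite -pred_Sn; lia.
Qed.

Lemma pm_sample (K : fieldType) (x : nat -> K) (N : nat) (m k : 'I_N) :
  (pm x m).[x k] = if k == m then (pm x m).[x m] else 0.
Proof.
case: eqP => [->//|/eqP km].
rewrite /pm horner_prod (bigD1 k) //= hornerXsubC subrr mul0r //.
Qed.

Lemma pm_nz (K : fieldType) (x : nat -> K) (N : nat) (m : 'I_N) :
  (forall i j, (i < N)%N -> (j < N)%N -> x i = x j -> i = j) ->
  (pm x m).[x m] != 0.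
Proof.
move=> inj; rewrite /pm horner_prod; apply/prodf_neq0 => j jm.
rewrite hornerXsubC subr_eq0; apply/eqP => /inj h.
by move: jm; rewrite -val_eqE /= (h (ltn_ord m) (ltn_ord j)) eqxx.
Qed.

Lemma interp (K : fieldType) (N : nat) (x : nat -> K) (r : {poly K}) (lam : K) :
  (forall i j, (i < N)%N -> (j < N)%N -> x i = x j -> i = j) -> (size r <= N)%N ->
  r.[lam] = \sum_(m < N) r.[x m] / (pm x m).[x m] * (pm x m).[lam].
Proof.
move=> inj sr.
set h := r - \sum_(m < N) (r.[x m] / (pm x m).[x m]) *: pm x m.
have hroot : forall k : 'I_N, h.[x k] = 0.
  move=> k; rewrite /h hornerD hornerN horner_sum (bigD1 k) //= big1.
    rewrite addr0 hornerZ mulfVK ?subrr //; exact: pm_nz.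
  move=> m mk; rewrite hornerZ [(pm x m).[x k]]pm_sample.
  by case: eqP => [km|_]; [rewrite km eqxx in mk | rewrite mulr0].
have sh : (size h <= N)%N.
  rewrite /h; apply: leq_trans (size_polyD _ _) _; rewrite geq_max sr size_polyN /=.
  apply: (big_ind (fun p : {poly K} => (size p <= N)%N)).
  - by rewrite size_poly0.
  - by move=> p q hp hq; apply: leq_trans (size_polyD _ _) _; rewrite geq_max hp.
  move=> i _; apply: leq_trans (size_scale_leq _ _) _.
  apply: size_prod_le2 => j; first by rewrite polyXsubC_eq0.
  by rewrite size_XsubC.
have h0 : h = 0.
  apply/eqP; apply: contraT => hn0.
  have := @max_poly_roots _ h [seq x (val k) | k <- enum 'I_N] hn0.
  rewrite size_map size_enum_ord.
  have -> : all (root h) [seq x (val k) | k <- enum 'I_N].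
    by apply/allP => y /mapP [k _ ->]; rewrite /root hroot.
  have -> : uniq [seq x (val k) | k <- enum 'I_N].
    rewrite map_inj_uniq ?enum_uniq // => k l h1; apply/val_inj; exact: inj (ltn_ord k) (ltn_ord l) h1.
  by move=> /(_ isT isT) /leq_trans /(_ sh); rewrite ltnn.
have := congr1 (fun p => p.[lam]) h0.
rewrite /h hornerD hornerN horner_sum horner0 => /eqP; rewrite subr_eq0 => /eqP ->.
by apply: eq_bigr => m _; rewrite hornerZ.
Qed.

Set Implicit Arguments. Unset Strict Implicit.

Lemma one_sub_nz (C : numClosedFieldType) (c z : C) :
  `|c| < 1 -> `|z| < 1 -> 1 - c * z != 0.
Proof.
move=> hc hz; rewrite subr_eq0; apply/eqP => h.
have : `|c * z| < 1 by rewrite normrM -(mulr1 1) ltr_pM.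
by rewrite -h normr1 ltxx.
Qed.

Lemma lin_eq (C : numClosedFieldType) (c : C) :
  1 - c%:P * 'X = (- c)%:P * 'X + 1%:P.
Proof. by rewrite polyCN mulNr addrC. Qed.

Lemma lin_size (C : numClosedFieldType) (c : C) : (size (1 - c%:P * 'X)%R <= 2)%N.
Proof.
rewrite lin_eq size_MXaddC oner_eq0 andbF.
by have := size_polyC_leq1 (- c).
Qed.

Lemma lin_nz (C : numClosedFieldType) (c : C) : 1 - c%:P * 'X != 0.
Proof.
by rewrite -size_poly_eq0 lin_eq size_MXaddC oner_eq0 andbF.
Qed.

Lemma lin_eval (C : numClosedFieldType) (c z : C) : (1 - c%:P * 'X).[z] = 1 - c * z.
Proof. by rewrite !hornerE. Qed.

Lemma Bden_nz (C : numClosedFieldType) (a : nat -> C) (N : nat) (z : C) :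
  (forall k, (k < N)%N -> `|a k| < 1) -> `|z| < 1 -> (Bden a N).[z] != 0.
Proof.
move=> ha hz; rewrite /Bden horner_prod; apply/prodf_neq0 => j _.
by rewrite lin_eval one_sub_nz // norm_conjC ha.
Qed.

Lemma Bnum_split (C : numClosedFieldType) (a : nat -> C) (N : nat) (m : 'I_N) :
  Bnum a N = ('X - (a m)%:P) * pm a m.
Proof. by rewrite /Bnum (bigD1 m). Qed.

Lemma Bder_at (C : numClosedFieldType) (a : nat -> C) (N : nat) (m : 'I_N) :
  (Bden a N).[a m] != 0 ->
  Bder a N (a m) = (pm a m).[a m] / (Bden a N).[a m].
Proof.
move=> hq; rewrite /Bder (Bnum_split a m) derivM derivXsubC !hornerE subrr.
field; exact: hq.
Qed.

Lemma core (C : numClosedFieldType) (a : nat -> C) (N : nat) (i : 'I_N) :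
  (forall k, (k < N.+1)%N -> `|a k| < 1) ->
  (forall k l, (k < N.+1)%N -> (l < N.+1)%N -> a k = a l -> k = l) ->
  \sum_(m < N) Beval a N (a N) / (Bder a N (a m) * (a N - a m))
      * (1 - a m * (a i)^*)^-1 = (1 - a N * (a i)^*)^-1.
Proof.
move=> ha inj.
have haN : forall k, (k < N)%N -> `|a k| < 1 by move=> k hk; apply: ha; lia.
have injN : forall k l, (k < N)%N -> (l < N)%N -> a k = a l -> k = l.
  by move=> k l hk hl; apply: inj; lia.
set lam := a N; set w := (a i)^*.
set r := \prod_(j < N | j != i) (1 - ((a j)^*)%:P * 'X).
have eqq : forall z, (Bden a N).[z] = (1 - w * z) * r.[z].
  by move=> z; rewrite /Bden (bigD1 i) //= hornerM lin_eval.
have hlam : `|lam| < 1 by apply: ha.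
have hw : `|w| < 1 by rewrite norm_conjC haN.
have wl : 1 - w * lam != 0 by apply: one_sub_nz.
have rl : r.[lam] != 0.
  by have := Bden_nz haN hlam; rewrite eqq mulf_eq0 negb_or => /andP[].
have sr : (size r <= N)%N.
  by apply: size_prod_le2 => j; [exact: lin_nz | exact: lin_size].
transitivity ((1 - w * lam)^-1 / r.[lam] *
   \sum_(m < N) r.[a m] / (pm a m).[a m] * (pm a m).[lam]); last first.
  rewrite -(@interp _ _ a r lam injN sr) (mulrC lam w).
  by field; rewrite wl rl.
rewrite mulr_sumr; apply: eq_bigr => m _.
have hm : `|a m| < 1 by apply: haN.
have qm := Bden_nz haN hm.
rewrite Bder_at // /Beval (Bnum_split a m) hornerM hornerXsubC !eqq.
have wm : 1 - w * a m != 0 by apply: one_sub_nz.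
have rm : r.[a m] != 0.
  by move: qm; rewrite eqq mulf_eq0 negb_or => /andP[].
have pmm : (pm a m).[a m] != 0 by apply: pm_nz.
have lm : lam - a m != 0.
  rewrite subr_eq0; apply/eqP => /inj h.
  by have := h (ltnSn N) (ltnW (ltn_ord m)) => hh; move: (ltn_ord m); rewrite -hh ltnn.
rewrite /w; field.
rewrite -/w !(mulrC (a _) w) wl wm rm rl pmm lm /=.
done.
Qed.
Unset Implicit Arguments. Set Strict Implicit.

Theorem lemma4p5 (C : numClosedFieldType) (n : nat) (a : nat -> C)
    (b : nat -> nat -> C) :
  (2 <= n)%N ->
  (forall i, (i < n)%N -> `|a i| < 1) ->
  (forall i j, (i < n)%N -> (j < n)%N -> a i = a j -> i = j) ->
  forall j, (j < n.-1)%N ->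
    orth_proj_coords a n n.-1 (fun m => b m j)
      (fun i => if (i < n.-1)%N then
                  b i j + (Beval a n.-1 (a n.-1))^* * b n.-1 j
                          / ((Bder a n.-1 (a i))^* * ((a n.-1)^* - (a i)^*))
                else 0).
Proof.
case: n => [//|N] _ ha inj j hj /=.
split; first by move=> m hm; rewrite ltnNge hm.
move=> i hi.
have hi' : (i < N.+1)%N by apply: leqW.
rewrite /kip exchange_big /=.
under eq_bigr => m _.
  rewrite (bigD1 (Ordinal hi')) //= big1 ?addr0; last first.
    move=> k hk; rewrite /kdelta.
    have hk' : (k == i :> nat) = false by apply/negbTE.
    by rewrite hk' conjC0 mulr0 mul0r.
  rewrite /kdelta eqxx conjC1 mulr1.
  over.
rewrite big_ord_recr /= ltnn subr0.
under eq_bigr => m _ do rewrite ltn_ord.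
have hc := congr1 Num.conj (core (Ordinal hi) ha inj).
rewrite rmorph_sum /= in hc.
have -> : gram a i N = \sum_(m < N) (Beval a N (a N))^* / ((Bder a N (a m))^* * ((a N)^* - (a m)^*)) * gram a i m.
  rewrite /gram /kfun.
  have -> : (1 - (a N)^* * a i)^-1 = (1 - a N * (a i)^*)^-1^*.
    by rewrite fmorphV rmorphB rmorph1 rmorphM /= conjCK.
  rewrite -{}hc; apply: eq_bigr => m _.
  by rewrite !(rmorphM, fmorphV, rmorphB, rmorph1) /= conjCK mulrC.
rewrite mulr_sumr -big_split /=; apply: big1 => m _.
ring.
Qed.
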